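(* Let $n\ge 2$ be an integer and $\Pi_2,\Pi_3>0$. Let $\mathbb{D}^2$ be the $n\times n$ circulant matrix with first row $(-2,1,0,\ldots,0,1)$, and let $A=\begin{bmatrix}0&I\\ \mathbb{D}^2&0\end{bmatrix}\in\mathbb{R}^{2n\times 2n}$, $B=\begin{bmatrix}0\\ I\end{bmatrix}\in\mathbb{R}^{2n\times n}$. Consider the linear quadratic regulator problem: minimize $$\int_0^\infty \boldsymbol{\Phi}(\tau)^T\begin{bmatrix}I&0\\0&\Pi_2 I\end{bmatrix}\boldsymbol{\Phi}(\tau)+\frac{1}{\Pi_3^2}\boldsymbol{\omega}(\tau)^T\boldsymbol{\omega}(\tau)\,d\tau$$ subject to $\frac{d}{d\tau}\boldsymbol{\Phi}(\tau)=A\boldsymbol{\Phi}(\tau)+B\boldsymbol{\omega}(\tau)$, with state $\boldsymbol{\Phi}(\tau)\in\mathbb{R}^{2n}$ and control $\boldsymbol{\omega}(\tau)\in\mathbb{R}^n$. Then the optimal feedback gain $K$ (so that the optimal control is $\boldsymbol{\omega}=-K\boldsymbol{\Phi}$) is $K=\begin{bmatrix}K_1&K_2\end{bmatrix}$ where $K_1,K_2$ are the circulant matrices $$K_1=F^{-1}\mathrm{diag}\big(\hat{K}_0(\kappa)\big)F,\qquad K_2=F^{-1}\mathrm{diag}\Big(\sqrt{2\hat{K}_0(\kappa)+\Pi_2\Pi_3^2}\Big)F,$$ with, for $\kappa\in\{0,\ldots,n-1\}$, $$\hat{K}_0(\kappa)=\hat{D}_{\kappa\kappa}+\sqrt{\hat{D}_{\kappa\kappa}^2+\Pi_3^2},\qquad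 \hat{D}_{\kappa\kappa}=-4\sin^2\!\left(\frac{\pi\kappa}{n}\right).$$ Equivalently, in the spatial frequency domain, $\hat{K}(\kappa)=\begin{bmatrix}\hat{K}_0(\kappa)&\sqrt{2\hat{K}_0(\kappa)+\Pi_2\Pi_3^2}\end{bmatrix}$.
   Context: $F$ denotes the $n\times n$ unitary discrete Fourier transform matrix, $F_{kj}=n^{-1/2}e^{-2\pi i kj/n}$ for $k,j\in\{0,\ldots,n-1\}$; $\mathrm{diag}(f(\kappa))$ is the $n\times n$ diagonal matrix whose $\kappa$-th diagonal entry is $f(\kappa)$, $\kappa=0,\ldots,n-1$. The optimal feedback gain of the LQR problem with cost $\int \boldsymbol{\Phi}^TQ\boldsymbol{\Phi}+\boldsymbol{\omega}^TR\boldsymbol{\omega}$ is $K=R^{-1}B^TP$, where $P$ is the symmetric positive definite (stabilizing) solution of the algebraic Riccati equation $PA+A^TP-PBR^{-1}B^TP+Q=0$. The nondimensional variables arise from the spatial discretization of the wave equation $\partial_t^2p=c^2\partial_x^2p+u$ on a circle, with $\Pi_2,\Pi_3$ weights on kinetic energy and (inverse) control effort. *)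

(* Defs.v *)
From HB Require Import structures.
From mathcomp Require Import all_boot all_order all_algebra.
From mathcomp Require Import complex.
From mathcomp Require Import reals trigo.
Set Implicit Arguments. Unset Strict Implicit. Unset Printing Implicit Defensive.
Import Order.TTheory GRing.Theory Num.Theory.
Local Open Scope ring_scope.
Local Open Scope complex_scope.

Section Defs.
Variable R : realType.

Definition toC (x : R) : R[i] := x%:C.

(* n x n circulant matrix with first row (c 0, c 1, ..., c (n-1)):
   entry (i,j) = c ((j - i) mod n). *)
Definition circulant (n : nat) (c : nat -> R) : 'M[R]_n :=
  \matrix_(i < n, j < n) c ((j + n - i) %% n)%N.

(* First row (-2, 1, 0, ..., 0, 1) of the periodic second-difference
   matrix D^2 (entries at positions 1 and n-1 are added, so for n = 2
   the off-diagonal entry is 2). *)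
Definition d2row (n : nat) (k : nat) : R :=
  (if k == 0%N then -2 else 0) + (if k == 1%N then 1 else 0)
  + (if k == n.-1 then 1 else 0).

Definition D2 (n : nat) : 'M[R]_n := circulant n (d2row n).

(* Unitary DFT matrix F_{kj} = n^{-1/2} exp(-2 pi i k j / n). *)
Definition dft (n : nat) : 'M[R[i]]_n :=
  \matrix_(k < n, j < n)
    ((Num.sqrt (n%:R : R))^-1 *
      (cos (2 * pi * (k * j)%:R / n%:R))
     +i* (- ((Num.sqrt (n%:R : R))^-1 * sin (2 * pi * (k * j)%:R / n%:R)))).

Definition cdiag (n : nat) (f : nat -> R) : 'M[R[i]]_n :=
  diag_mx (\row_(k < n) toC (f k)).

Definition fourier_circ (n : nat) (f : nat -> R) : 'M[R[i]]_n :=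
  invmx (dft n) *m cdiag n f *m dft n.

Definition Amat (n : nat) : 'M[R]_(n + n) := block_mx 0 1%:M (D2 n) 0.
Definition Bmat (n : nat) : 'M[R]_(n + n, n) := col_mx 0 1%:M.
Definition Qmat (n : nat) (Pi2 : R) : 'M[R]_(n + n) :=
  block_mx 1%:M 0 0 (Pi2%:M).
Definition Rmat (n : nat) (Pi3 : R) : 'M[R]_n := (Pi3 ^- 2)%:M.

Definition sym_mx (m : nat) (P : 'M[R]_m) : Prop := P^T = P.
Definition posdef_mx (m : nat) (P : 'M[R]_m) : Prop :=
  forall x : 'cV[R]_m, x != 0 -> 0 < (x^T *m P *m x) ord0 ord0.

Definition hurwitz (m : nat) (M : 'M[R]_m) : Prop :=
  forall lam : R[i], eigenvalue (map_mx toC M) lam -> Re lam < 0.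

Definition care (m p : nat) (A : 'M[R]_m) (B : 'M[R]_(m, p)) (Q : 'M[R]_m)
  (Rw : 'M[R]_p) (P : 'M[R]_m) : Prop :=
  P *m A + A^T *m P - P *m B *m invmx Rw *m B^T *m P + Q = 0.

Definition lqr_gain (m p : nat) (B : 'M[R]_(m, p)) (Rw : 'M[R]_p)
  (P : 'M[R]_m) : 'M[R]_(p, m) := invmx Rw *m B^T *m P.

Definition lqr_riccati_sol (m p : nat) (A : 'M[R]_m) (B : 'M[R]_(m, p))
  (Q : 'M[R]_m) (Rw : 'M[R]_p) (P : 'M[R]_m) : Prop :=
  [/\ sym_mx P, posdef_mx P, care A B Q Rw P & hurwitz (A - B *m lqr_gain B Rw P)].

Definition Dhat (n : nat) (k : nat) : R := - 4 * (sin (pi * k%:R / n%:R)) ^+ 2.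
Definition Khat0 (n : nat) (Pi3 : R) (k : nat) : R :=
  Dhat n k + Num.sqrt (Dhat n k ^+ 2 + Pi3 ^+ 2).
Definition Khat2 (n : nat) (Pi2 Pi3 : R) (k : nat) : R :=
  Num.sqrt (2 * Khat0 n Pi3 k + Pi2 * Pi3 ^+ 2).

End Defs.

(* Main.v *)
Require Import Defs.
From HB Require Import structures.
From mathcomp Require Import all_boot all_order all_algebra.
From mathcomp Require Import complex.
From mathcomp Require Import reals trigo.
From mathcomp Require Import ring lra.
Import Order.TTheory GRing.Theory Num.Theory.
Local Open Scope ring_scope.
Set Implicit Arguments. Unset Strict Implicit. Unset Printing Implicit Defensive.
Local Open Scope complex_scope.
Section Trig.
Variable R : realType.
Lemma demoivre (a : R) (k : nat) :
  ((cos a) +i* (- sin a)) ^+ k = (cos (k%:R * a)) +i* (- sin (k%:R * a)).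
Proof.
elim: k => [|k IH]; first by rewrite expr0 mul0r cos0 sin0 oppr0.
rewrite exprSr IH; simpc.
rewrite -natr1 mulrDl mul1r cosD sinD.
congr (_ +i* _); ring.
Qed.
Lemma sin_pi_sub (x : R) : sin (pi - x) = sin x.
Proof. by rewrite sinB sinpi cospi mul0r sub0r mulN1r opprK. Qed.
End Trig.
Section Fourier.
Variable R : realType.
Variable m : nat.
Local Notation n := m.+2.
Local Notation C := R[i].

Lemma n_gt0 : (0 < n%:R :> R). Proof. by rewrite ltr0n. Qed.
Lemma n_neq0 : (n%:R != 0 :> R). Proof. by rewrite pnatr_eq0. Qed.

Lemma nz2 : (2 + m%:R != 0 :> R).
Proof. by rewrite -(natrD R 2 m) pnatr_eq0. Qed.

Definition th : R := 2 * pi / n%:R.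
Definition w : C := (cos th) +i* (- sin th).

Lemma w_pow k : w ^+ k = (cos (k%:R * th)) +i* (- sin (k%:R * th)).
Proof. exact: demoivre. Qed.

Lemma w_n : w ^+ n = 1.
Proof.
rewrite w_pow; have -> : (n%:R * th = pi *+ 2 :> R).
  by rewrite /th mulr2n; field; exact: nz2.
by rewrite cos2pi sin2pi oppr0.
Qed.

Lemma w_neq0 : w != 0.
Proof. by apply/eqP => h; have := w_n; rewrite h expr0n /= => /eqP; rewrite eq_sym oner_eq0. Qed.

Lemma cos_th_lt1 a : (0 < a < n)%N -> cos (a%:R * th) < 1.
Proof.
move=> /andP[a0 an].
have -> : a%:R * th = (pi * a%:R / n%:R : R) *+ 2 :> R.
  by rewrite /th mulr2n; field; exact: nz2.
rewrite cos_mulr2n cos2sin2.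
have : 0 < sin (pi * a%:R / n%:R : R).
  apply: sin_gt0_pi; apply/andP; split.
    by rewrite mulr_gt0 ?invr_gt0 ?n_gt0 ?mulr_gt0 ?pi_gt0 ?ltr0n.
  rewrite -mulrA gtr_pMr ?pi_gt0 // ltr_pdivrMr ?n_gt0 // mul1r ltr_nat //.
move=> h. have h2 : 0 < sin (pi * a%:R / n%:R : R) ^+ 2 by rewrite exprn_gt0.
lra.
Qed.

Lemma w_pow_neq1 a : (0 < a < n)%N -> w ^+ a != 1.
Proof.
move=> h; rewrite w_pow; apply/eqP => -[h1 _].
by have := cos_th_lt1 h; rewrite h1 ltxx.
Qed.

Lemma conj_w : w^*%C = w^-1.
Proof.
apply: (mulIf w_neq0); rewrite mulVf ?w_neq0 //.
rewrite /w; simpc; rewrite -!expr2 cos2Dsin2 [sin th * _]mulrC addrC subrr //.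
Qed.

End Fourier.
Section Fourier2.
Variable R : realType.
Variable m : nat.
Local Notation n := m.+2.
Local Notation C := R[i].
Local Notation w := (w R m).

Definition g (x : 'I_n) : C := w ^+ x.

Lemma g_add x y : g (x + y) = g x * g y.
Proof. by rewrite /g /= expr_mod ?w_n // exprD. Qed.

Lemma g0 : g 0 = 1. Proof. by rewrite /g expr0. Qed.

Lemma g_n x : g x ^+ n = 1.
Proof. by rewrite /g -exprM mulnC exprM w_n expr1n. Qed.

Lemma g_neq0 x : g x != 0.
Proof. by rewrite /g expf_neq0 // w_neq0. Qed.

Lemma g_opp x : g (- x) = (g x)^-1.
Proof. by apply: (mulIf (g_neq0 x)); rewrite -g_add addNr g0 mulVf ?g_neq0. Qed.

Lemma g_neq1 x : x != 0 -> g x != 1.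
Proof.
move=> hx; apply: w_pow_neq1; rewrite ltn_ord andbT lt0n.
by apply: contra hx => /eqP h; apply/eqP/val_inj.
Qed.

Lemma toCM (a b : R) : (a * b)%:C = a%:C * b%:C :> C.
Proof. exact: rmorphM. Qed.
Lemma toCD (a b : R) : (a + b)%:C = a%:C + b%:C :> C.
Proof. exact: rmorphD. Qed.

Lemma toC_nat k : ((k%:R : R)%:C = k%:R :> C).
Proof. exact: rmorph_nat. Qed.

Lemma conjcM (a b : C) : (a * b)^*%C = a^*%C * b^*%C.
Proof. exact: rmorphM. Qed.
Lemma conjcD (a b : C) : (a + b)^*%C = a^*%C + b^*%C.
Proof. exact: rmorphD. Qed.
Lemma conjc_sum (I : finType) (F : I -> C) : (\sum_i F i)^*%C = \sum_i (F i)^*%C.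
Proof. exact: rmorph_sum. Qed.

Lemma conj_pow (z : C) k : (z ^+ k)^*%C = (z^*%C) ^+ k.
Proof. by elim: k => [|k IH]; rewrite ?expr0 ?conjc1 // !exprS conjcM IH. Qed.

Lemma conjc_real' (x : R) : (x%:C)^*%C = x%:C.
Proof. exact: conjc_real. Qed.

Lemma conj_g x : (g x)^*%C = g (- x).
Proof.
rewrite g_opp /g -exprVn; elim: (nat_of_ord x) => [|k IH]; first by rewrite !expr0 conjc1.
by rewrite !exprS conjcM IH conj_w.
Qed.

Definition sc : R := (Num.sqrt (n%:R : R))^-1.

Lemma sc2 : sc ^+ 2 = (n%:R)^-1.
Proof. by rewrite /sc exprVn sqr_sqrtr // ler0n. Qed.

Lemma dftE k j : dft R n k j = sc%:C * g j ^+ k.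
Proof.
rewrite /dft mxE /g -exprM w_pow /sc; simpc.
have -> : (2 * pi * (k * j)%:R / n%:R = (j * k)%:R * th R m :> R).
  by rewrite /th mulnC; field; exact: nz2.
by [].
Qed.

Definition Fs : 'M[C]_n := \matrix_(i, k) (sc%:C * g (- i) ^+ k).

Lemma FsF : Fs *m dft R n = 1%:M.
Proof.
apply/matrixP => i j; rewrite !mxE.
have e : forall k, Fs i k * dft R n k j = ((n%:R)^-1)%:C * (g (- i + j))^+k.
  move=> k; rewrite mxE dftE g_add exprMn -sc2 expr2 toCM; ring.
under eq_bigr => k _ do rewrite e.
rewrite -mulr_sumr.
have [->|hij] := eqVneq i j.
  rewrite addNr g0 /=; under eq_bigr => k _ do rewrite expr1n.
  by rewrite sumr_const card_ord -toC_nat -toCM mulVf ?n_neq0.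

have hz : g (- i + j) != 1.
  apply: g_neq1; apply: contra hij; rewrite addrC subr_eq0 => /eqP ->; by [].
have : (g (- i + j) - 1) * (\sum_(k < n) g (- i + j) ^+ k) = 0.
  by rewrite -subrX1 g_n subrr.
move/eqP; rewrite mulf_eq0 subr_eq0 (negPf hz) /= => /eqP ->.
by rewrite mulr0.
Qed.

Lemma FFs : dft R n *m Fs = 1%:M.
Proof. exact: mulmx1C FsF. Qed.

Lemma dft_unit : dft R n \in unitmx.
Proof. by case: (mulmx1_unit FFs). Qed.

Lemma inv_dft : invmx (dft R n) = Fs.
Proof. by rewrite -[RHS](mulKmx dft_unit) FFs mulmx1. Qed.

End Fourier2.
Section Fourier3.
Variable R : realType.
Variable m : nat.
Local Notation n := m.+2.
Local Notation C := R[i].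
Local Notation w := (w R m).
Local Notation g := (@g R m).
Local Notation F := (dft R n).
Local Notation Fs := (Fs R m).

Definition phi (f : nat -> R) : 'M[C]_n := Fs *m cdiag n f *m F.

Lemma phi_ext (f1 f2 : nat -> R) : (forall k, f1 k = f2 k) -> phi f1 = phi f2.
Proof.
move=> e; rewrite /phi; congr (_ *m _ *m _).
by apply/matrixP => i j; rewrite !mxE e.
Qed.

Lemma phiE f i j :
  phi f i j = ((n%:R : R)^-1)%:C * \sum_(k < n) (f k)%:C * g (- i + j) ^+ k.
Proof.
rewrite /phi /cdiag mul_mx_diag mxE mulr_sumr; apply: eq_bigr => k _.
rewrite dftE !mxE g_add exprMn -sc2 expr2 !toCM /toC; ring.
Qed.

Definition fsym (f : nat -> R) := forall k : 'I_n, f (- k : 'I_n) = f k.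

Lemma reindex_sym f x : fsym f ->
  \sum_(k < n) (f k)%:C * g (- x) ^+ k = \sum_(k < n) (f k)%:C * g x ^+ k.
Proof.
move=> fs; rewrite [RHS](reindex_inj oppr_inj); apply: eq_bigr => k _.
rewrite fs; congr (_ * _).
rewrite /= expr_mod ?g_n // g_opp exprVn.
have e : g x ^+ (n - k) * g x ^+ k = 1 by rewrite -exprD subnK ?g_n // ltnW.
by rewrite -[LHS]mul1r -e mulfK //; apply: expf_neq0; apply: g_neq0.
Qed.

Lemma conj_real (z : C) : z^*%C = z -> real_complex R (complex.Re z) = z.
Proof. by case: z => a b /= [] h; congr (_ +i* _); lra. Qed.

Lemma phi_conj f i j : fsym f -> (phi f i j)^*%C = phi f i j.
Proof.
move=> fs; rewrite !phiE conjcM conjc_real conjc_sum; congr (_ * _).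
rewrite -[RHS](reindex_sym _ fs); apply: eq_bigr => k _.
by rewrite conjcM conjc_real conj_pow conj_g.
Qed.

Definition Cr (f : nat -> R) : 'M[R]_n := \matrix_(i, j) complex.Re (phi f i j).

Lemma CrE f : fsym f -> map_mx (real_complex R) (Cr f) = phi f.
Proof.
move=> fs; apply/matrixP => i j; rewrite mxE /Cr mxE; exact: conj_real (phi_conj _ _ fs).
Qed.

Lemma Cr_tr f : fsym f -> (Cr f)^T = Cr f.
Proof.
move=> fs; apply/matrixP => i j; rewrite mxE /Cr mxE mxE !phiE; congr (complex.Re (_ * _)).
rewrite -(reindex_sym _ fs); apply: eq_bigr => k _.
by rewrite opprD opprK addrC.
Qed.

End Fourier3.
Section Fourier4.
Variable R : realType.
Variable m : nat.
Local Notation n := m.+2.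
Local Notation C := R[i].
Local Notation w := (w R m).
Local Notation g := (@g R m).
Local Notation F := (dft R n).
Local Notation Fs := (Fs R m).
Local Notation phi := (@phi R m).
Local Notation fsym := (@fsym R m).
Local Notation rc := (real_complex R).
Implicit Types (f : nat -> R) (c : R).

Lemma val_opp (k : 'I_n) : nat_of_ord (- k) = ((n - k) %% n)%N.
Proof. by []. Qed.

Lemma pi_sub_div (x : R) : pi * (n%:R - x) / n%:R = pi - pi * x / n%:R.
Proof. by field; exact: nz2. Qed.

Lemma Dhat_sym : fsym (Dhat R n).
Proof.
move=> k; rewrite val_opp.
have [->|k0] := eqVneq k 0; first by rewrite subn0 modnn.
have kp : (0 < k)%N by rewrite lt0n; apply: contra k0 => /eqP h; apply/eqP/val_inj.
rewrite modn_small; last by rewrite ltn_subrL kp.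
rewrite /Dhat natrB; last exact: ltnW.
by rewrite pi_sub_div sin_pi_sub.
Qed.
Lemma cdiagD (f1 f2 : nat -> R) : cdiag n (fun k => f1 k + f2 k) = cdiag n f1 + cdiag n f2.
Proof. by apply/matrixP => i j; rewrite !mxE /toC toCD mulrnDl. Qed.

Lemma phiD (f1 f2 : nat -> R) : phi (fun k => f1 k + f2 k) = phi f1 + phi f2.
Proof. by rewrite /phi cdiagD mulmxDr mulmxDl. Qed.

Lemma cdiagZ c f : cdiag n (fun k => c * f k) = rc c *: cdiag n f.
Proof. by apply/matrixP => i j; rewrite !mxE /toC toCM mulrnAr. Qed.

Lemma phiZ c f : phi (fun k => c * f k) = rc c *: phi f.
Proof. by rewrite /phi cdiagZ -scalemxAr -scalemxAl. Qed.

Lemma cdiagM (f1 f2 : nat -> R) : cdiag n (fun k => f1 k * f2 k) = cdiag n f1 *m cdiag n f2.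
Proof. by apply/matrixP => i j; rewrite /cdiag mul_diag_mx !mxE /toC toCM mulrnAr. Qed.

Lemma phiM (f1 f2 : nat -> R) : phi (fun k => f1 k * f2 k) = phi f1 *m phi f2.
Proof.
rewrite /phi cdiagM !mulmxA -[Fs *m _ *m F *m Fs]mulmxA FFs mulmx1 //.
Qed.

Lemma cdiagc c : cdiag n (fun _ => c) = (rc c)%:M.
Proof. by apply/matrixP => i j; rewrite !mxE. Qed.

Lemma phic c : phi (fun _ => c) = (rc c)%:M.
Proof. by rewrite /phi cdiagc mul_mx_scalar -scalemxAl FsF scalemx1. Qed.

Lemma val_one : nat_of_ord (1 : 'I_n) = 1%N.
Proof. by rewrite /= modn_small. Qed.

Lemma val_mone : nat_of_ord (-1 : 'I_n) = m.+1.
Proof. by rewrite val_opp val_one subn1 modn_small. Qed.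

Lemma toC1 : rc 1 = 1. Proof. exact: rmorph1. Qed.

Lemma g1 : g 1 = w.
Proof. by rewrite /g val_one expr1. Qed.

Lemma cond_eq (j l c : 'I_n) : ((j + n - l) %% n == c)%N = (l == j - c).
Proof.
have h : nat_of_ord (j - l) = ((j + n - l) %% n)%N.
  by rewrite /= modnDmr addnBA // ltnW.
rewrite -h val_eqE subr_eq [c + l]addrC -subr_eq eq_sym //.
Qed.

Lemma sum_pick (h : 'I_n -> C) (j c : 'I_n) (a : R) :
  \sum_(l < n) h l * rc (if ((j + n - l) %% n == c)%N then a else 0) = h (j - c) * rc a.
Proof.
under eq_bigr => l _ do rewrite cond_eq.
rewrite (bigD1 (j - c)) //= eqxx big1 ?addr0 // => l /negPf ->.
by rewrite mulr0.
Qed.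

Lemma d2rowE x : d2row R n x =
  (if x == nat_of_ord (0 : 'I_n) then -2 else 0) + (if x == nat_of_ord (1 : 'I_n) then 1 else 0)
  + (if x == nat_of_ord (-1 : 'I_n) then 1 else 0).
Proof. by rewrite /d2row val_one val_mone. Qed.

Lemma key k : rc (-2) + (w ^+ k)^-1 + w ^+ k = rc (Dhat R n k).
Proof.
rewrite -exprVn -conj_w -conj_pow w_pow /Dhat; simpc.
congr (_ +i* _).
have -> : (k%:R * th R m = (pi * k%:R / n%:R) *+ 2 :> R).
  by rewrite /th mulr2n; field; exact: nz2.
rewrite cos_mulr2n cos2sin2; lra.
Qed.

Lemma D2_fourier : map_mx rc (D2 R n) = phi (Dhat R n).
Proof.
have e : F *m map_mx rc (D2 R n) = cdiag n (Dhat R n) *m F.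
  apply/matrixP => k j; rewrite /cdiag mul_diag_mx [RHS]mxE dftE mxE.
  under eq_bigr => l _ do rewrite dftE mxE /D2 /circulant mxE d2rowE !toCD !mulrDr.
  rewrite !big_split !sum_pick subr0 opprK !g_add g_opp mxE /toC.
  rewrite g1 /= !exprMn exprVn -key toC1; ring.
by rewrite /phi -mulmxA -e mulmxA FsF mul1mx.
Qed.

End Fourier4.
Section Mcalc.
Variable R : realType.
Variable m : nat.
Local Notation n := m.+2.
Local Notation C := R[i].
Local Notation phi := (@phi R m).
Local Notation fsym := (@fsym R m).
Local Notation rc := (real_complex R).

Definition M_def (h : R -> R) : 'M[R]_n := @Cr R m (fun k => h (Dhat R n k)).
Fact M_key : unit. Proof. by []. Qed.
Definition M := locked_with M_key M_def.
Lemma ME h : M h = @Cr R m (fun k => h (Dhat R n k)).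
Proof. by rewrite /M unlock. Qed.

Lemma fsymM h : fsym (fun k => h (Dhat R n k)).
Proof. by move=> k; rewrite /= Dhat_sym. Qed.

Lemma MtoC h : map_mx rc (M h) = phi (fun k => h (Dhat R n k)).
Proof. rewrite ME; exact: CrE (fsymM h). Qed.

Lemma rcinj p q : injective (map_mx rc : 'M[R]_(p, q) -> 'M[C]_(p, q)).
Proof. exact: map_mx_inj. Qed.

Lemma M_ext h1 h2 : (forall d, h1 d = h2 d) -> M h1 = M h2.
Proof. by move=> e; apply: rcinj; rewrite !MtoC; apply: phi_ext => k; rewrite e. Qed.

Lemma MD h1 h2 : M (fun d => h1 d + h2 d) = M h1 + M h2.
Proof. by apply: rcinj; rewrite map_mxD !MtoC phiD. Qed.

Lemma MZ c h : M (fun d => c * h d) = c *: M h.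
Proof. by apply: rcinj; rewrite map_mxZ !MtoC phiZ. Qed.

Lemma MN h : M (fun d => - h d) = - M h.
Proof.
rewrite -scaleN1r -MZ; apply: M_ext => d; by rewrite mulN1r.
Qed.

Lemma MM h1 h2 : M (fun d => h1 d * h2 d) = M h1 *m M h2.
Proof. by apply: rcinj; rewrite map_mxM !MtoC phiM. Qed.

Lemma Mc c : M (fun _ => c) = c%:M.
Proof. by apply: rcinj; rewrite map_scalar_mx MtoC phic. Qed.

Lemma Mid : M (fun d => d) = D2 R n.
Proof. by apply: rcinj; rewrite MtoC D2_fourier. Qed.

Lemma MT h : (M h)^T = M h.
Proof. rewrite ME; exact: Cr_tr (fsymM h). Qed.

Lemma M0 h : (forall d, h d = 0) -> M h = 0.
Proof. by move=> e; rewrite (M_ext (h2 := fun _ => 0)) // Mc; apply/matrixP => i j; rewrite !mxE mul0rn. Qed.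

End Mcalc.

Local Close Scope complex_scope.

Lemma zlin (V : zmodType) (a b c d e f g q : V) :
  (a - b - c + d) + (e - f - d + g) = (a + e - b + q) - (c + f - g + q).
Proof.
rewrite [c + f - g + q]addrC addrKA.
rewrite [e - f - d + g]addrAC addrACA subrr addr0.
rewrite !opprD opprK !addrA.
by rewrite [a - b - c + e]addrAC [a - b + e]addrAC.
Qed.

Lemma zlin' (V : zmodType) (a b c d e f g q : V) :
  (a - b - (c - d)) + (e - f - (d - g)) = (a + e - b + q) - (c + f - g + q).
Proof.
have -> : a - b - (c - d) = a - b - c + d by rewrite opprB addrA addrAC.
have -> : e - f - (d - g) = e - f - d + g by rewrite opprB addrA addrAC.
exact: zlin.
Qed.

Lemma ric_diff_gen (R : comRingType) k (A S Q P P0 : 'M[R]_k) : S^T = S -> P0^T = P0 ->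
 P *m A + A^T *m P - P *m S *m P + Q = 0 -> P0 *m A + A^T *m P0 - P0 *m S *m P0 + Q = 0 ->
 (P - P0) *m (A - S *m P) + (A - S *m P0)^T *m (P - P0) = 0.
Proof.
move=> hS hP0 e1 e2.
rewrite (raddfB (@trmx _ k k)) /= trmx_mul hS hP0 !mulmxBl !mulmxBr !mulmxA.
by rewrite (@zlin' _ _ _ _ _ _ _ _ Q) e1 e2 subrr.
Qed.

Section Sylv.
Variable R : realType.
Local Notation C := R[i].

Lemma ReNC (z : C) : 'Re (- z) = - 'Re z.
Proof. by rewrite !ReE rmorphN /= -opprD mulNr. Qed.

Lemma sylvester p (X A N : 'M[C]_p) : X *m A + N *m X = 0 ->
  (forall lam, eigenvalue A lam -> 'Re lam < 0) ->
  (forall lam, eigenvalue N lam -> 'Re lam < 0) -> X = 0.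
Proof.
case: p X A N => [|p] X A N hX hA hN; first by apply/matrixP => [[]].
have mE : forall U V : 'M[C]_p.+1, U * V = U *m V by [].
have hXA : X *m A = (- N) *m X by rewrite mulNmx; apply/eqP; rewrite -subr_eq0 opprK hX.
have key : forall q : {poly C}, X *m horner_mx A q = horner_mx (- N) q *m X.
  elim/poly_ind => [|q c IH]; first by rewrite !rmorph0 mulmx0 mul0mx.
  rewrite !rmorphD !rmorphM /= !horner_mx_X !horner_mx_C !mE.
  rewrite mulmxDr mulmxDl mulmxA IH -mulmxA hXA mulmxA; congr (_ + _).
  by rewrite scalar_mxC.
have hU : horner_mx (- N) (char_poly A) *m X = 0 by rewrite -key Cayley_Hamilton mulmx0.
suff U : horner_mx (- N) (char_poly A) \in unitmx.
  by rewrite -[X](mulKmx U) hU mulmx0.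
have [rs ers] := closed_field_poly_normal (char_poly A).
have rsE : forall z, z \in rs -> eigenvalue A z.
  by move=> z hz; rewrite eigenvalue_root_char ers (monicP (char_poly_monic A)) scale1r root_prod_XsubC.
rewrite ers (monicP (char_poly_monic A)) scale1r rmorph_prod big_seq.
apply: (big_ind (fun U : 'M[C]_p.+1 => U \in unitmx)) => [|U V hU' hV|z hz].
- exact: unitmx1.
- by rewrite mE unitmx_mul hU' hV.
rewrite rmorphB /= horner_mx_X horner_mx_C -row_free_unit -kermx_eq0.
apply/negPn/negP => hz'.
have ez : eigenvalue (- N) z by [].
have : eigenvalue N (- z).
  move/eigenvalueP: ez => [v hv v0]; apply/eigenvalueP; exists v => //.
  by move: hv; rewrite mulmxN scaleNr => <-; rewrite opprK.
move/hN; rewrite ReNC oppr_lt0 => h1.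
have h2 := hA _ (rsE _ hz).
by have := lt_trans h1 h2; rewrite ltxx.
Qed.
End Sylv.

Section LQR.
Variable R : realType.
Variable m : nat.
Local Notation n := m.+2.
Variables Pi2 Pi3 : R.
Hypothesis hPi2 : 0 < Pi2.
Hypothesis hPi3 : 0 < Pi3.
Local Notation M := (@M R m).

Definition r := Pi3 ^+ 2.
Definition k1 (d : R) := d + Num.sqrt (d ^+ 2 + Pi3 ^+ 2).
Definition k2 (d : R) := Num.sqrt (2 * k1 d + Pi2 * Pi3 ^+ 2).
Definition p1 d := (k1 d - d) * k2 d / r.
Definition p2 d := k1 d / r.
Definition p3 d := k2 d / r.

Lemma r_gt0 : 0 < r. Proof. by rewrite /r exprn_gt0. Qed.

Lemma facts d : [/\ 0 < k1 d - d, 0 < k1 d, k1 d ^+ 2 - 2 * d * k1 d = r,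
  0 < k2 d & k2 d ^+ 2 = 2 * k1 d + Pi2 * r].
Proof.
have rp := r_gt0.
set s := Num.sqrt (d ^+ 2 + Pi3 ^+ 2).
have hs : s ^+ 2 = d ^+ 2 + r by rewrite /s sqr_sqrtr // addr_ge0 ?sqr_ge0 // ltW.
have s0 : 0 <= s by rewrite sqrtr_ge0.
have sp : 0 < s by rewrite sqrtr_gt0 ltr_pwDr // ?sqr_ge0.
have k1p : 0 < k1 d by rewrite /k1 -/s; case: (lerP 0 d) => hd; nra.
have e1 : k1 d ^+ 2 - 2 * d * k1 d = r by rewrite /k1 -/s; nra.
have k2e : 0 < 2 * k1 d + Pi2 * r by have := mulr_gt0 hPi2 rp; lra.
split => //; first by rewrite /k1 -/s; lra.
  by rewrite /k2 sqrtr_gt0.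
by rewrite /k2 sqr_sqrtr // ltW.
Qed.

Definition P0 : 'M[R]_(n + n) := block_mx (M p1) (M p2) (M p2) (M p3).
Definition Sm : 'M[R]_(n + n) := Bmat R n *m invmx (Rmat n Pi3) *m (Bmat R n)^T.

Lemma invRm : invmx (Rmat n Pi3) = r%:M.
Proof. by rewrite /Rmat invmx_scalar invrK. Qed.

Lemma eA : Amat R n = block_mx 0 (M (fun _ => 1)) (M (fun d => d)) 0.
Proof. by rewrite Mc Mid. Qed.

Lemma eAT : (Amat R n)^T = block_mx 0 (M (fun d => d)) (M (fun _ => 1)) 0.
Proof. by rewrite eA tr_block_mx !MT !trmx0. Qed.

Lemma eS : Sm = block_mx 0 0 0 (M (fun _ => r)).
Proof.
rewrite /Sm invRm /Bmat tr_col_mx mul_col_mx mul_col_row !trmx0 trmx1 Mc.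
by rewrite !mul0mx !mulmx0 mul1mx mulmx1.
Qed.

Lemma eQ : Qmat n Pi2 = block_mx (M (fun _ => 1)) 0 0 (M (fun _ => Pi2)).
Proof. by rewrite !Mc. Qed.

Lemma SP (X : 'M[R]_(n + n)) :
  X *m Bmat R n *m invmx (Rmat n Pi3) *m (Bmat R n)^T *m X = X *m Sm *m X.
Proof. by rewrite /Sm !mulmxA. Qed.

Lemma care_P0 : care (Amat R n) (Bmat R n) (Qmat n Pi2) (Rmat n Pi3) P0.
Proof.
rewrite /care SP eS eQ eAT eA /P0 !mulmx_block.
rewrite opp_block_mx !add_block_mx.
rewrite -[RHS]block_mx0; congr block_mx.
all: rewrite ?mulmx0 ?mul0mx ?addr0 ?add0r ?mulmx0 ?mul0mx ?addr0 ?add0r.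
all: rewrite -!MM -!MN -!MD; apply: M0 => d.
all: have [_ _ e1 _ e2] := facts d; have rn : r != 0 by rewrite lt0r_neq0 // r_gt0.
all: rewrite /p1 /p2 /p3.
- transitivity ((2 * d * k1 d - k1 d ^+ 2 + r) / r); first by field.
  by rewrite -e1 (_ : _ - _ + _ = 0) ?mul0r //; ring.
- by field.
- by field.
- transitivity ((2 * k1 d - k2 d ^+ 2 + Pi2 * r) / r); first by field.
  by rewrite e2 (_ : _ - _ + _ = 0) ?mul0r //; ring.
Qed.
Local Notation C := R[i].
Local Notation rc := (real_complex R).
Local Notation F := (dft R n).
Local Notation Fs := (Fs R m).

Lemma spec_diag (a b : R -> R) (lam : C) (z : 'rV[C]_n) : z != 0 ->
  z *m (map_mx rc (M a) + lam *: map_mx rc (M b) - (lam ^+ 2)%:M) = 0 ->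
  exists k : 'I_n, rc (a (Dhat R n k)) + lam * rc (b (Dhat R n k)) - lam ^+ 2 = 0.
Proof.
move=> z0 hz.
set c := \row_(k < n) (rc (a (Dhat R n k)) + lam * rc (b (Dhat R n k)) - lam ^+ 2).
have e : map_mx rc (M a) + lam *: map_mx rc (M b) - (lam ^+ 2)%:M = Fs *m diag_mx c *m F.
  have -> : diag_mx c = cdiag n (fun k => a (Dhat R n k)) + lam *: cdiag n (fun k => b (Dhat R n k))
      - (lam ^+ 2)%:M.
    apply/matrixP => i j; rewrite !mxE /toC; case: (i == j) => /=; rewrite ?mulr1n ?mulr0n //.
    by rewrite mulr0 subr0 addr0.
  rewrite !MtoC /phi mulmxBr mulmxDr mulmxBl mulmxDl.
  by rewrite -scalemxAr -scalemxAl mul_mx_scalar -scalemxAl FsF scalemx1.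
set y := z *m Fs.
have y0 : y != 0.
  apply: contra z0 => /eqP y0; apply/eqP.
  by rewrite -[z]mulmx1 -(FsF R m) mulmxA -/y y0 mul0mx.
have hy : y *m diag_mx c = 0.
  have h0 : z *m (Fs *m diag_mx c *m F) = 0 by rewrite -e.
  move: h0; rewrite !mulmxA => h0.
  by rewrite -[y *m _]mulmx1 -(FFs R m) mulmxA /y h0 mul0mx.
case: (pickP (fun k => y 0 k != 0)) => [k hk | h].
  exists k; move/matrixP: hy => /(_ 0 k); rewrite mul_mx_diag mxE [c _ _]mxE [RHS]mxE => /eqP.
  by rewrite mulf_eq0 (negPf hk) /= => /eqP.
have y00 : y = 0.
  by apply/matrixP => i j; rewrite (ord1 i) [RHS]mxE; move: (h j) => /negbFE/eqP.
by rewrite y00 eqxx in y0.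
Qed.
Lemma quad_re (p q : R) (lam : C) : 0 < p -> 0 < q ->
  rc (- q) + lam * rc (- p) - lam ^+ 2 = 0 -> complex.Re lam < 0.
Proof.
case: lam => x y pp qp; rewrite expr2; simpc => /eqP; rewrite eq_complex /=.
case/andP => /eqP h1 /eqP h2.
have hy : y * (2 * x + p) = 0 by lra.
move/eqP: hy; rewrite mulf_eq0 => /orP[/eqP y0|/eqP h]; last by lra.
rewrite y0 in h1; nra.
Qed.

Definition aa (d : R) := - (k1 d - d).
Definition bb (d : R) := - k2 d.

Lemma gain_P0 : lqr_gain (Bmat R n) (Rmat n Pi3) P0 = row_mx (M k1) (M k2).
Proof.
rewrite /lqr_gain invRm /Bmat tr_col_mx trmx0 trmx1 mul_mx_row mulmx0 mulmx1 /P0.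
rewrite mul_row_block !mul0mx !add0r -Mc -!MM.
have rn : r != 0 by rewrite lt0r_neq0 // r_gt0.
by congr row_mx; apply: M_ext => d; rewrite /p2 /p3; field.
Qed.

Lemma eAcl : Amat R n - Bmat R n *m lqr_gain (Bmat R n) (Rmat n Pi3) P0 =
  block_mx 0 (M (fun _ => 1)) (M aa) (M bb).
Proof.
rewrite gain_P0 eA /Bmat mul_col_row !mul0mx !mul1mx opp_block_mx add_block_mx.
rewrite !subrr subr0 sub0r -!MN -MD.
by congr block_mx; apply: M_ext => d; rewrite /aa; ring.
Qed.

Lemma toCmap p q (A : 'M[R]_(p, q)) : map_mx (@toC R) A = map_mx rc A.
Proof. by []. Qed.

Lemma map_M1 : map_mx rc (M (fun _ => 1)) = 1%:M.
Proof. by rewrite Mc map_scalar_mx rmorph1. Qed.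

Lemma finish_quad (lam : C) (z : 'rV[C]_n) : z != 0 ->
  z *m (map_mx rc (M aa) + lam *: map_mx rc (M bb) - (lam ^+ 2)%:M) = 0 ->
  complex.Re lam < 0.
Proof.
move=> z0 hz; have [k hk] := spec_diag z0 hz.
have [f1 _ _ f4 _] := facts (Dhat R n k).
exact: quad_re f4 f1 hk.
Qed.

Lemma ReC_lt0 (lam : C) : complex.Re lam < 0 -> 'Re lam < 0.
Proof. by move=> h; rewrite -complexRe ltcE /= eqxx. Qed.

Lemma hurwitz_Acl0 : hurwitz (block_mx 0 (M (fun _ => 1)) (M aa) (M bb)).
Proof.
move=> lam /eigenvalueP [v hv v0].
rewrite toCmap map_block_mx map_mx0 map_M1 in hv.
rewrite -(hsubmxK v) in hv v0; set x := lsubmx v in hv v0; set y := rsubmx v in hv v0.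
rewrite mul_row_block scale_row_mx !mulmx0 add0r mulmx1 in hv.
case/eq_row_mx: hv => h1 h2.
have hx : x = lam *: y - y *m map_mx rc (M bb) by rewrite -h2 addrK.
have y0 : y != 0.
  apply: contra v0 => /eqP y0; rewrite hx y0 mul0mx scaler0 subr0 row_mx0 //.
apply: ReC_lt0; apply: (finish_quad y0).
rewrite mulmxBr mulmxDr -scalemxAr mul_mx_scalar h1 hx scalerBr scalerA -expr2.
by rewrite subrK subrr.
Qed.

Lemma hurwitz_Acl0T : hurwitz (block_mx 0 (M (fun _ => 1)) (M aa) (M bb))^T.
Proof.
rewrite tr_block_mx trmx0 !MT.
move=> lam /eigenvalueP [v hv v0].
rewrite toCmap map_block_mx map_mx0 map_M1 in hv.
rewrite -(hsubmxK v) in hv v0; set x := lsubmx v in hv v0; set y := rsubmx v in hv v0.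
rewrite mul_row_block scale_row_mx !mulmx0 add0r mulmx1 in hv.
case/eq_row_mx: hv => h1 h2.
have x0 : x != 0.
  apply: contra v0 => /eqP x0; rewrite h1 x0 scaler0 row_mx0 //.
apply: ReC_lt0; apply: (finish_quad x0).
rewrite mulmxBr mulmxDr -scalemxAr mul_mx_scalar scalemxAl -h1 h2 h1 scalerA -expr2.
by rewrite subrr.
Qed.
Definition gg d := Num.sqrt (p1 d).
Definition hh d := p2 d / gg d.
Definition ll d := Num.sqrt (p3 d - hh d ^+ 2).

Lemma pos_facts d : 0 < p1 d /\ 0 < p3 d - hh d ^+ 2.
Proof.
have [f1 f2 e1 f4 e2] := facts d; have rp := r_gt0.
have p1p : 0 < p1 d by rewrite /p1 !mulr_gt0 // invr_gt0.
split => //.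
have hh2 : hh d ^+ 2 = p2 d ^+ 2 / p1 d by rewrite /hh expr_div_n sqr_sqrtr // ltW.
rewrite hh2.
have rn : r != 0 by rewrite lt0r_neq0.
have kn : k1 d - d != 0 by rewrite lt0r_neq0.
have k2n : k2 d != 0 by rewrite lt0r_neq0.
have -> : p3 d - p2 d ^+ 2 / p1 d =
    (k2 d ^+ 2 * (k1 d - d) - k1 d ^+ 2) / (r * (k1 d - d) * k2 d).
  by rewrite /p1 /p2 /p3; field; rewrite k2n kn rn.
have -> : k2 d ^+ 2 * (k1 d - d) - k1 d ^+ 2 = r + (k1 d - d) * Pi2 * r.
  by rewrite e2 -e1; ring.
by rewrite divr_gt0 // ?addr_gt0 // ?mulr_gt0.
Qed.

Lemma MG2 : M gg *m M gg = M p1.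
Proof.
rewrite -MM; apply: M_ext => d; have [h _] := pos_facts d.
by rewrite /gg -expr2 sqr_sqrtr // ltW.
Qed.

Lemma gg_neq0 d : gg d != 0.
Proof. by have [h _] := pos_facts d; rewrite /gg lt0r_neq0 // sqrtr_gt0. Qed.

Lemma MGH : M gg *m M hh = M p2.
Proof. by rewrite -MM; apply: M_ext => d; rewrite /hh mulrC mulfVK ?gg_neq0. Qed.

Lemma MHG : M hh *m M gg = M p2.
Proof. by rewrite -MM; apply: M_ext => d; rewrite /hh mulfVK ?gg_neq0. Qed.

Lemma MHL : M hh *m M hh + M ll *m M ll = M p3.
Proof.
rewrite -!MM -MD; apply: M_ext => d; have [_ h] := pos_facts d.
by rewrite -!expr2 /ll sqr_sqrtr ?ltW // addrC subrK.
Qed.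

Lemma Minv (f : R -> R) : (forall d, f d != 0) -> M (fun d => (f d)^-1) *m M f = 1%:M.
Proof. by move=> h; rewrite -MM -Mc; apply: M_ext => d; rewrite mulVf. Qed.

Definition Tm : 'M[R]_(n + n) := block_mx (M gg) (M hh) 0 (M ll).

Lemma P0_fact : P0 = Tm^T *m Tm.
Proof.
rewrite /Tm tr_block_mx trmx0 !MT mulmx_block.
by rewrite ?mulmx0 ?mul0mx ?addr0 ?add0r MG2 MGH MHG MHL.
Qed.

Lemma ll_neq0 d : ll d != 0.
Proof. by have [_ h] := pos_facts d; rewrite /ll lt0r_neq0 // sqrtr_gt0. Qed.

Lemma Tm_inj (x : 'cV[R]_(n + n)) : Tm *m x = 0 -> x = 0.
Proof.
have ex : x = col_mx (usubmx x) (dsubmx x) by rewrite vsubmxK.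
move: (usubmx x) (dsubmx x) ex => u v ->.
rewrite /Tm mul_block_col !mul0mx add0r => /eqP.
rewrite -col_mx0 => /eqP /eq_col_mx [h1 h2].
have v0 : v = 0.
  by rewrite -[v]mul1mx -(Minv ll_neq0) -mulmxA h2 mulmx0.
move: h1; rewrite v0 mulmx0 addr0 => h1.
have u0 : u = 0.
  by rewrite -[u]mul1mx -(Minv gg_neq0) -mulmxA h1 mulmx0.
by rewrite u0 col_mx0.
Qed.

Lemma posdef_P0 : posdef_mx P0.
Proof.
move=> x x0; rewrite P0_fact mulmxA -mulmxA -trmx_mul.
set y := Tm *m x.
have y0 : y != 0 by apply: contra x0 => /eqP /Tm_inj ->.
rewrite mxE.
have [i hi] : exists i, y i 0 != 0.
  case: (pickP (fun i => y i 0 != 0)) => [i hi | h]; first by exists i.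
  case/eqP: y0; apply/matrixP => i j; rewrite (ord1 j) [RHS]mxE.
  by move: (h i) => /negbFE/eqP.
rewrite (bigD1 i) //= ltr_pwDl //.
  by rewrite mxE -expr2 lt0r sqrf_eq0 hi sqr_ge0.
by apply: sumr_ge0 => k _; rewrite mxE -expr2 sqr_ge0.
Qed.
Lemma P0_sym : sym_mx P0.
Proof. by rewrite /sym_mx /P0 tr_block_mx !MT. Qed.

Lemma P0_sol : lqr_riccati_sol (Amat R n) (Bmat R n) (Qmat n Pi2) (Rmat n Pi3) P0.
Proof.
split; [exact: P0_sym | exact: posdef_P0 | exact: care_P0 |].
rewrite eAcl; exact: hurwitz_Acl0.
Qed.

Lemma BK (X : 'M[R]_(n + n)) : Bmat R n *m lqr_gain (Bmat R n) (Rmat n Pi3) X = Sm *m X.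
Proof. by rewrite /lqr_gain /Sm !mulmxA. Qed.

Lemma SmT : Sm^T = Sm.
Proof. by rewrite eS tr_block_mx !trmx0 MT. Qed.

Lemma uniq_P (P : 'M[R]_(n + n)) :
  lqr_riccati_sol (Amat R n) (Bmat R n) (Qmat n Pi2) (Rmat n Pi3) P -> P = P0.
Proof.
case => _ _ cP hP.
have cP0 := care_P0.
move: cP cP0; rewrite /care !SP => cP cP0.
have D := ric_diff_gen SmT P0_sym cP cP0.
have hA : forall lam, eigenvalue (map_mx rc (Amat R n - Sm *m P)) lam -> 'Re lam < 0.
  by move=> lam; rewrite -BK -toCmap; apply: hP.
have hN : forall lam, eigenvalue (map_mx rc (Amat R n - Sm *m P0)^T) lam -> 'Re lam < 0.
  by move=> lam; rewrite -BK eAcl -toCmap; apply: hurwitz_Acl0T.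
have := sylvester (X := map_mx rc (P - P0)) _ hA hN.
rewrite -!map_mxM -map_mxD D map_mx0 => /(_ erefl) h.
apply/eqP; rewrite -subr_eq0; apply/eqP; apply: (@rcinj R).
by rewrite h map_mx0.
Qed.

Lemma final_exist :
  exists P, lqr_riccati_sol (Amat R n) (Bmat R n) (Qmat n Pi2) (Rmat n Pi3) P.
Proof. by exists P0; exact: P0_sol. Qed.

Lemma final_gain (P : 'M[R]_(n + n)) :
  lqr_riccati_sol (Amat R n) (Bmat R n) (Qmat n Pi2) (Rmat n Pi3) P ->
  map_mx (@toC R) (lqr_gain (Bmat R n) (Rmat n Pi3) P) =
    row_mx (fourier_circ n (Khat0 n Pi3)) (fourier_circ n (Khat2 n Pi2 Pi3)).
Proof.
move=> /uniq_P ->; rewrite gain_P0 toCmap map_row_mx !MtoC /fourier_circ inv_dft.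
by [].
Qed.

End LQR.

Unset Implicit Arguments.

Theorem lemma1 (R : realType) (n : nat) (Pi2 Pi3 : R) :
  (2 <= n)%N -> 0 < Pi2 -> 0 < Pi3 ->
  (exists P : 'M[R]_(n + n),
     lqr_riccati_sol (Amat R n) (Bmat R n) (Qmat n Pi2) (Rmat n Pi3) P) /\
  (forall P : 'M[R]_(n + n),
     lqr_riccati_sol (Amat R n) (Bmat R n) (Qmat n Pi2) (Rmat n Pi3) P ->
     map_mx (@toC R) (lqr_gain (Bmat R n) (Rmat n Pi3) P) =
       row_mx (fourier_circ n (Khat0 n Pi3)) (fourier_circ n (Khat2 n Pi2 Pi3))).
Proof.
case: n => [|[|m]] // _ h2 h3.
split; first by apply: final_exist.
by move=> P hP; apply: final_gain.
Qed.
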